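(* Let $\mathbf{M}$ be a de Morgan algebra. The following are equivalent: (1) $\mathbf{M}$ is a perfect extension of its Boolean skeleton $B(\mathbf{M})$. (2) $\mathbf{M}$ is (isomorphic to) a Boolean product of copies of $\mathbf{M}_1$ and of its subalgebras $\{0,a,1\}$ and $\{0,1\}$. (3) In the dual space $\mathbf{X}=(X;f,\preccurlyeq,\tau)$ of $\mathbf{M}$, for all $x,y\in X$, $x\preccurlyeq y$ implies $x=y$ or $x=f(y)$.
   Context: A de Morgan algebra is an algebra $(L;\vee,\wedge,{}^\circ,0,1)$ where $(L;\vee,\wedge,0,1)$ is a bounded distributive lattice and ${}^\circ$ is a unary operation satisfying $x^{\circ\circ}=x$, $(x\wedge y)^\circ=x^\circ\vee y^\circ$, $1^\circ=0$. Its Boolean skeleton is the subalgebra $B(\mathbf{M})=\{x\in M\mid x\vee x^\circ=1\}$. An algebra $\mathbf{A}$ is a perfect extension of its subalgebra $\mathbf{B}$ if every congruence of $\mathbf{B}$ has exactly one extension to a congruence of $\mathbf{A}$ (i.e. exactly one $\theta\in\mathrm{Con}(\mathbf{A})$ with $\theta\cap B^2$ equal to the given congruence). $\mathbf{M}_1$ is the four-element de Morgan algebra on $\{0,a,b,1\}$ with lattice order $0<a,b<1$ ($a,b$ incomparable) and $0^\circ=1$, $1^\circ=0$, $a^\circ=a$, $b^\circ=b$. A Boolean product of an indexed family $(\mathbf{A}_y)_{y\in Y}$ of algebras ($Y\neq\emptyset$) is a subdirect product $\mathbf{A}\le\prod_{y\in Y}\mathbf{A}_y$ such that $Y$ can be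 endowed with a Boolean space topology (compact, Hausdorff, with a basis of clopen sets) so that (i) for all $u,v\in A$ the set $\{y\in Y\mid u(y)=v(y)\}$ is clopen, and (ii) for all $u,v\in A$ and clopen $K\subseteq Y$, the function equal to $u$ on $K$ and to $v$ on $Y\setminus K$ belongs to $A$. Dual space: the alter ego of $\mathbf{M}_1$ is $(\{0,a,b,1\};f,\preccurlyeq,\text{discrete topology})$ where $\preccurlyeq$ is the partial order with $b$ the bottom, $a$ the top, and $0,1$ incomparable, and $f(0)=0$, $f(1)=1$, $f(a)=b$, $f(b)=a$. The dual space of $\mathbf{M}$ is $\mathbf{X}=(X;f,\preccurlyeq,\tau)$ where $X$ is the set of all de Morgan algebra homomorphisms $\mathbf{M}\to\mathbf{M}_1$, $f(x)=f\circ x$, $x\preccurlyeq y$ iff $x(m)\preccurlyeq y(m)$ for all $m\in M$, and $\tau$ is the topology inherited from the product topology on $\{0,a,b,1\}^M$ (discrete factors). This is a Priestley space with an order-reversing homeomorphism $f$ of order two, and $\mathbf{M}$ is isomorphic to the algebra of all continuous maps $X\to\{0,a,b,1\}$ preserving $\preccurlyeq$ and commuting with $f$, with operations defined pointwise in $\mathbf{M}_1$. *)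

(* Defs.v *)
From HB Require Import structures.
From mathcomp Require Import all_boot all_order.
From mathcomp Require Import all_classical topology.
Set Implicit Arguments. Unset Strict Implicit. Unset Printing Implicit Defensive.
Local Open Scope classical_set_scope.

Record dm_ops (T : Type) := DmOps {
  dm_join : T -> T -> T;
  dm_meet : T -> T -> T;
  dm_neg  : T -> T;
  dm_zero : T;
  dm_one  : T }.

Definition is_deMorgan (T : Type) (M : dm_ops T) : Prop :=
  let j := dm_join M in let m := dm_meet M in let n := dm_neg M in
  let z := dm_zero M in let o := dm_one M in
  (forall x y w, j x (j y w) = j (j x y) w) /\
  (forall x y w, m x (m y w) = m (m x y) w) /\
  (forall x y, j x y = j y x) /\
  (forall x y, m x y = m y x) /\
  (forall x y, j x (m x y) = x) /\
  (forall x y, m x (j x y) = x) /\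
  (forall x y w, m x (j y w) = j (m x y) (m x w)) /\
  (forall x, j x z = x) /\
  (forall x, m x o = x) /\
  (forall x, n (n x) = x) /\
  (forall x y, n (m x y) = j (n x) (n y)) /\
  n o = z.

Definition is_subalgebra (T : Type) (M : dm_ops T) (S : T -> Prop) : Prop :=
  S (dm_zero M) /\ S (dm_one M) /\
  (forall x y, S x -> S y -> S (dm_join M x y)) /\
  (forall x y, S x -> S y -> S (dm_meet M x y)) /\
  (forall x, S x -> S (dm_neg M x)).

(** A congruence of S is represented by a relation on T which only
    relates elements of S, and is an equivalence relation on S compatible
    with the operations of S. *)
Definition is_congruence_on (T : Type) (M : dm_ops T) (S : T -> Prop)
    (th : T -> T -> Prop) : Prop :=
  (forall x y, th x y -> S x /\ S y) /\
  (forall x, S x -> th x x) /\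
  (forall x y, th x y -> th y x) /\
  (forall x y w, th x y -> th y w -> th x w) /\
  (forall x x' y y', th x x' -> th y y' -> th (dm_join M x y) (dm_join M x' y')) /\
  (forall x x' y y', th x x' -> th y y' -> th (dm_meet M x y) (dm_meet M x' y')) /\
  (forall x x', th x x' -> th (dm_neg M x) (dm_neg M x')).

Definition is_congruence (T : Type) (M : dm_ops T) (th : T -> T -> Prop) : Prop :=
  is_congruence_on M (fun _ => True) th.

Definition restricts_to (T : Type) (S : T -> Prop) (th phi : T -> T -> Prop) : Prop :=
  forall x y, S x -> S y -> (th x y <-> phi x y).

Definition perfect_extension (T : Type) (M : dm_ops T) (S : T -> Prop) : Prop :=
  forall phi, is_congruence_on M S phi ->
    (exists th, is_congruence M th /\ restricts_to S th phi) /\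
    (forall th1 th2, is_congruence M th1 -> restricts_to S th1 phi ->
                     is_congruence M th2 -> restricts_to S th2 phi ->
                     forall x y, th1 x y <-> th2 x y).

Definition boolean_skeleton (T : Type) (M : dm_ops T) : T -> Prop :=
  fun x => dm_join M x (dm_neg M x) = dm_one M.

Inductive m1 := m1_0 | m1_a | m1_b | m1_1.

Definition m1_join (x y : m1) : m1 :=
  match x, y with
  | m1_1, _ | _, m1_1 => m1_1
  | m1_0, y => y
  | x, m1_0 => x
  | m1_a, m1_a => m1_a
  | m1_b, m1_b => m1_b
  | _, _ => m1_1
  end.

Definition m1_meet (x y : m1) : m1 :=
  match x, y with
  | m1_0, _ | _, m1_0 => m1_0
  | m1_1, y => y
  | x, m1_1 => x
  | m1_a, m1_a => m1_a
  | m1_b, m1_b => m1_b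
  | _, _ => m1_0
  end.

Definition m1_neg (x : m1) : m1 :=
  match x with m1_0 => m1_1 | m1_1 => m1_0 | m1_a => m1_a | m1_b => m1_b end.

Inductive factor := F_M1 | F_0a1 | F_01.

Definition in_factor (k : factor) (c : m1) : Prop :=
  match k with
  | F_M1 => True
  | F_0a1 => c = m1_0 \/ c = m1_a \/ c = m1_1
  | F_01 => c = m1_0 \/ c = m1_1
  end.

Definition boolean_space (Y : topologicalType) : Prop :=
  compact [set: Y] /\ hausdorff_space Y /\
  (forall U : set Y, open U -> forall y, U y ->
     exists K : set Y, clopen K /\ K y /\ K `<=` U).

(** P (a set of elements of prod_y A_y, where A_y is the subalgebra of M1
    named by [kind y]) is a Boolean product of the family (A_y)_y. *)
Definition boolean_product (Y : topologicalType) (kind : Y -> factor)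
    (P : (Y -> m1) -> Prop) : Prop :=
  (exists y : Y, True) /\
  (forall u, P u -> forall y, in_factor (kind y) (u y)) /\
  P (fun _ => m1_0) /\ P (fun _ => m1_1) /\
  (forall u v, P u -> P v -> P (fun y => m1_join (u y) (v y))) /\
  (forall u v, P u -> P v -> P (fun y => m1_meet (u y) (v y))) /\
  (forall u, P u -> P (fun y => m1_neg (u y))) /\
  (forall y c, in_factor (kind y) c -> exists u, P u /\ u y = c) /\
  boolean_space Y /\
  (forall u v, P u -> P v -> clopen [set y | u y = v y]) /\
  (forall u v (K : set Y), P u -> P v -> clopen K ->
     forall w : Y -> m1, (forall y, K y -> w y = u y) ->
                         (forall y, ~ K y -> w y = v y) -> P w).

Definition iso_boolean_product_M1 (T : Type) (M : dm_ops T) : Prop :=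
  exists (Y : topologicalType) (kind : Y -> factor) (h : T -> (Y -> m1)),
    (forall x x', h x = h x' -> x = x') /\
    (forall x x', h (dm_join M x x') = (fun y => m1_join (h x y) (h x' y))) /\
    (forall x x', h (dm_meet M x x') = (fun y => m1_meet (h x y) (h x' y))) /\
    (forall x, h (dm_neg M x) = (fun y => m1_neg (h x y))) /\
    h (dm_zero M) = (fun _ => m1_0) /\
    h (dm_one M) = (fun _ => m1_1) /\
    boolean_product kind (fun u => exists x, h x = u).

(** The alter-ego order: b is the bottom, a the top, 0 and 1 incomparable. *)
Definition m1_dle (c d : m1) : Prop :=
  c = d \/ c = m1_b \/ d = m1_a.

Definition m1_f (c : m1) : m1 :=
  match c with m1_0 => m1_0 | m1_1 => m1_1 | m1_a => m1_b | m1_b => m1_a end.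

(** Points of the dual space: de Morgan homomorphisms M -> M1. *)
Definition is_hom_to_M1 (T : Type) (M : dm_ops T) (x : T -> m1) : Prop :=
  (forall p q, x (dm_join M p q) = m1_join (x p) (x q)) /\
  (forall p q, x (dm_meet M p q) = m1_meet (x p) (x q)) /\
  (forall p, x (dm_neg M p) = m1_neg (x p)) /\
  x (dm_zero M) = m1_0 /\ x (dm_one M) = m1_1.

Definition dual_le (T : Type) (x y : T -> m1) : Prop := forall p, m1_dle (x p) (y p).

(* Main.v *)
Require Import Defs.
From HB Require Import structures.
From mathcomp Require Import all_boot all_order.
From mathcomp Require Import all_classical topology.
Set Implicit Arguments. Unset Strict Implicit. Unset Printing Implicit Defensive.
Local Open Scope classical_set_scope.

Definition m1_eqb (c d : m1) : bool :=
  match c, d with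
  | m1_0, m1_0 | m1_a, m1_a | m1_b, m1_b | m1_1, m1_1 => true
  | _, _ => false end.
Lemma m1_eqP : Equality.axiom m1_eqb.
Proof. by case; case; constructor. Qed.
HB.instance Definition _ := hasDecEq.Build m1 m1_eqP.

Definition dleb (c d : m1) : bool := [|| c == d, c == m1_b | d == m1_a].
Lemma dlebP c d : m1_dle c d -> dleb c d.
Proof. by case: c; case: d; rewrite /m1_dle /dleb /=; intuition. Qed.
Lemma iffb (a b c d : m1) : (a = b <-> c = d) -> (a == b) = (c == d).
Proof. by move=> [H1 H2]; apply/eqP/eqP. Qed.
Lemma neqb (a b : m1) : a <> b -> (a == b) = false.
Proof. by move=> H; apply/eqP. Qed.

Definition isUF (T : Type) (M : dm_ops T) (U : set T) : Prop :=
  (forall e, U e -> dm_join M e (dm_neg M e) = dm_one M) /\ U (dm_one M) /\ ~ U (dm_zero M) /\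
  (forall e1 e2, U e1 -> U e2 -> U (dm_meet M e1 e2)) /\
  (forall e, dm_join M e (dm_neg M e) = dm_one M -> U e \/ U (dm_neg M e)) /\
  (forall e1 e2, dm_join M e1 (dm_neg M e1) = dm_one M -> dm_join M e2 (dm_neg M e2) = dm_one M -> U (dm_meet M e1 e2) -> U e1 /\ U e2).

Definition Pts (T : Type) (M : dm_ops T) := {U : set T | isUF M U}.
HB.instance Definition _ T M := gen_eqMixin (@Pts T M).
HB.instance Definition _ T M := gen_choiceMixin (@Pts T M).

Definition bas (T : Type) (M : dm_ops T) (e : T) : set (Pts M) := fun V => sval V e.
Arguments bas {T} M e.
Definition opP (T : Type) (M : dm_ops T) (A : set (Pts M)) :=
  forall V, A V -> exists e, sval V e /\ bas M e `<=` A.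

Arguments opP {T} M A.
Lemma opP_T (T : Type) (M : dm_ops T) : opP M setT.
Proof. move=> V _; exists (dm_one M); split=> //; by case: (svalP V) => _ []. Qed.
Lemma opP_I (T : Type) (M : dm_ops T) : setI_closed (@opP T M).
Proof.
move=> A B oA oB V [AV BV].
have [e1 [V1 s1]] := oA V AV; have [e2 [V2 s2]] := oB V BV.
exists (dm_meet M e1 e2); split.
  by case: (svalP V) => _ [_ [_ [H _]]]; exact: H.
have [B1 _] := svalP V.
move=> W /(proj2 (proj2 (proj2 (proj2 (proj2 (svalP W))))) _ _ (B1 _ V1) (B1 _ V2)) [W1 W2].
by split; [apply: s1|apply: s2].
Qed.
Lemma opP_U (T : Type) (M : dm_ops T) (I : Type) (f : I -> set (Pts M)) :
  (forall i, opP M (f i)) -> opP M (\bigcup_i f i).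
Proof.
move=> H V [i _ fiV]; have [e [Ve se]] := H i V fiV; exists e; split=> // W We.
by exists i => //; apply: se.
Qed.
HB.instance Definition _ T M := isOpenTopological.Build (@Pts T M) (@opP_T T M) (@opP_I T M) (@opP_U T M).


Section DM.
Variables (T : Type) (M : dm_ops T).
Hypothesis HM : is_deMorgan M.
Local Notation J := (dm_join M).
Local Notation Mt := (dm_meet M).
Local Notation N := (dm_neg M).
Local Notation Z := (dm_zero M).
Local Notation O := (dm_one M).

Lemma jA x y w : J x (J y w) = J (J x y) w. Proof. by case: HM. Qed.
Lemma mA x y w : Mt x (Mt y w) = Mt (Mt x y) w. Proof. by case: HM => _ []. Qed.
Lemma jC x y : J x y = J y x. Proof. by case: HM => _ [_ []]. Qed.
Lemma mC x y : Mt x y = Mt y x. Proof. by case: HM => _ [_ [_ []]]. Qed.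
Lemma jm x y : J x (Mt x y) = x. Proof. by case: HM => _ [_ [_ [_ []]]]. Qed.
Lemma mj x y : Mt x (J x y) = x. Proof. by case: HM => _ [_ [_ [_ [_ []]]]]. Qed.
Lemma mD x y w : Mt x (J y w) = J (Mt x y) (Mt x w).
Proof. by case: HM => _ [_ [_ [_ [_ [_ []]]]]]. Qed.
Lemma j0 x : J x Z = x. Proof. by case: HM => _ [_ [_ [_ [_ [_ [_ []]]]]]]. Qed.
Lemma mO x : Mt x O = x. Proof. by case: HM => _ [_ [_ [_ [_ [_ [_ [_ []]]]]]]]. Qed.
Lemma nn x : N (N x) = x. Proof. by case: HM => _ [_ [_ [_ [_ [_ [_ [_ [_ []]]]]]]]]. Qed.
Lemma nM x y : N (Mt x y) = J (N x) (N y).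
Proof. by case: HM => _ [_ [_ [_ [_ [_ [_ [_ [_ [_ []]]]]]]]]]. Qed.
Lemma n1 : N O = Z.
Proof. by case: HM => _ [_ [_ [_ [_ [_ [_ [_ [_ [_ []]]]]]]]]]. Qed.

Lemma n0 : N Z = O. Proof. by rewrite -n1 nn. Qed.
Lemma nJ x y : N (J x y) = Mt (N x) (N y).
Proof. by rewrite -{1}(nn x) -{1}(nn y) -nM nn. Qed.
Lemma jD x y w : J x (Mt y w) = Mt (J x y) (J x w).
Proof.
apply: (can_inj nn); rewrite nJ !nM mD; congr (J _ _); by rewrite nJ.
Qed.
Lemma mxx x : Mt x x = x. Proof. by rewrite -{2}(jm x x) mj. Qed.
Lemma jxx x : J x x = x. Proof. by rewrite -{2}(mj x x) jm. Qed.
Lemma m0 x : Mt x Z = Z. Proof. rewrite mC; have := mj Z x; by rewrite jC j0. Qed.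
Lemma j1 x : J x O = O. Proof. rewrite jC; have := jm O x; by rewrite mC mO. Qed.
Lemma m1l x : Mt O x = x. Proof. by rewrite mC mO. Qed.
Lemma j0l x : J Z x = x. Proof. by rewrite jC j0. Qed.
Lemma m0l x : Mt Z x = Z. Proof. by rewrite mC m0. Qed.
Lemma j1l x : J O x = O. Proof. by rewrite jC j1. Qed.

Definition le x y := Mt x y = x.
Lemma leJ x y : le x y <-> J x y = y.
Proof. split=> H; first by rewrite -H jC mC jm. by rewrite /le -{1}H mj. Qed.
Lemma le_refl x : le x x. Proof. exact: mxx. Qed.
Lemma le_trans x y w : le x y -> le y w -> le x w.
Proof. rewrite /le => H1 H2; by rewrite -H1 -mA H2. Qed.
Lemma le_anti x y : le x y -> le y x -> x = y.
Proof. rewrite /le => H1 H2; by rewrite -H1 mC H2. Qed.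
Lemma leml x y : le (Mt x y) x. Proof. by rewrite /le mC mA mxx. Qed.
Lemma lemr x y : le (Mt x y) y. Proof. by rewrite /le -mA mxx. Qed.
Lemma lejl x y : le x (J x y). Proof. exact: mj. Qed.
Lemma lejr x y : le y (J x y). Proof. by rewrite jC; exact: mj. Qed.
Lemma le_m x y w : le w x -> le w y -> le w (Mt x y).
Proof. rewrite /le => H1 H2; by rewrite mA H1 H2. Qed.
Lemma le_j x y w : le x w -> le y w -> le (J x y) w.
Proof. move=> /leJ H1 /leJ H2; apply/leJ; by rewrite -jA H2 H1. Qed.
Lemma le1 x : le x O. Proof. exact: mO. Qed.
Lemma le0 x : le Z x. Proof. exact: m0l. Qed.
Lemma mMM a b c : Mt (Mt a b) c = Mt (Mt a c) (Mt b c).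
Proof. by rewrite -!mA (mA c) (mC c b) -(mA b) mxx. Qed.
Lemma jJJ a b c : J (J a b) c = J (J a c) (J b c).
Proof. by rewrite -!jA (jA c) (jC c b) -(jA b) jxx. Qed.
Lemma le_mm a b c d : le a b -> le c d -> le (Mt a c) (Mt b d).
Proof.
move=> H1 H2; apply: le_m; [apply: le_trans H1; exact: leml|apply: le_trans H2; exact: lemr].
Qed.
Lemma le_jj a b c d : le a b -> le c d -> le (J a c) (J b d).
Proof.
move=> H1 H2; apply: le_j; [apply: le_trans H1 _; exact: lejl|apply: le_trans H2 _; exact: lejr].
Qed.

Definition is_filter (F : T -> Prop) :=
  F O /\ (forall x y, F x -> F y -> F (Mt x y)) /\ (forall x y, F x -> le x y -> F y).
Definition is_ideal (I : T -> Prop) :=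
  I Z /\ (forall x y, I x -> I y -> I (J x y)) /\ (forall x y, I y -> le x y -> I x).
Definition is_prime (P : T -> Prop) :=
  is_filter P /\ ~ P Z /\ (forall x y, P (J x y) -> P x \/ P y).

Lemma PFT (F I : T -> Prop) : is_filter F -> is_ideal I ->
  (forall x, F x -> I x -> False) ->
  exists P, is_prime P /\ (forall x, F x -> P x) /\ (forall x, P x -> I x -> False).
Proof.
move=> [F1 [FM FU]] [I0 [IJ ID]] FI.
pose good (X : set T) := is_filter X /\ (forall x, F x -> X x) /\ (forall x, X x -> I x -> False).
pose P' (X : set T) := X = set0 \/ good X.
have [A [PA Amax]] : exists A, P' A /\ forall B, A `<` B -> ~ P' B.
  apply: Zorn_bigcup => C CP Ctot.
  have [allE|] := pselect (forall X, C X -> X = set0).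
    left; apply/seteqP; split=> // x [X CX]; by rewrite (allE X CX).
  move=> /existsNP [X0 /not_implyP [CX0 X0n]].
  have gX0 : good X0 by case: (CP X0 CX0).
  have gen X : C X -> forall x, X x -> good X.
    move=> CX x Xx; case: (CP X CX) => // E; by rewrite E in Xx.
  right; split; [split; [|split]|split].
  - exists X0 => //; by case: gX0 => [[]].
  - move=> x y [X1 C1 X1x] [X2 C2 X2y].
    have [S12|S21] := Ctot _ _ C1 C2.
    + exists X2 => //; have [[_ [H _]] _] := gen _ C2 _ X2y; apply: H => //; exact: S12.
    + exists X1 => //; have [[_ [H _]] _] := gen _ C1 _ X1x; apply: H => //; exact: S21.
  - move=> x y [X1 C1 X1x] lxy; exists X1 => //.
    have [[_ [_ H]] _] := gen _ C1 _ X1x; exact: H lxy.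
  - move=> x Fx; exists X0 => //; case: gX0 => _ [H _]; exact: H.
  - move=> x [X1 C1 X1x] Ix; have [_ [_ H]] := gen _ C1 _ X1x; exact: H Ix.
have gA : good A.
  case: PA => // A0; exfalso; apply: (Amax F); last by right; split => //; split.
  rewrite A0; split=> //; move=> /(_ O F1) //.
have [[A1 [AM AU]] [FA AI]] := gA.
exists A; split; last by [].
split; first by [].
split; first by move=> A0; apply: (AI Z) => //.
move=> x y Axy; apply: contrapT => /not_orP [nAx nAy].
pose upx (w : T) := fun z => exists2 g, A g & le (Mt g w) z.
have upxG w : ~ A w -> exists2 g, A g & I (Mt g w).
  move=> nAw.
  have : ~ P' (upx w).
    apply: Amax; split.
      move=> z Az; exists z => //; exact: leml.
    move=> /(_ w) H; apply: nAw; apply: H; exists O => //; rewrite m1l; exact: le_refl.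
  move=> /not_orP [_ ngood].
  apply: contrapT => nex; apply: ngood; split; [split; [|split]|split].
  - exists O => //; exact: le1.
  - move=> z1 z2 [g1 Ag1 l1] [g2 Ag2 l2]; exists (Mt g1 g2); first exact: AM.
    have -> : Mt (Mt g1 g2) w = Mt (Mt g1 w) (Mt g2 w).
      by rewrite -!mA (mA w) (mC w g2) -(mA g2) mxx.
    exact: le_mm.
  - move=> z1 z2 [g Ag l] l2; exists g => //; exact: le_trans l2.
  - move=> z Fz; exists z; first exact: FA; exact: leml.
  - move=> z [g Ag l] Iz; apply: nex; exists g => //; exact: ID l.
have [g1 Ag1 I1] := upxG _ nAx.
have [g2 Ag2 I2] := upxG _ nAy.
apply: (AI (Mt (Mt g1 g2) (J x y))); first exact: (AM _ _ (AM _ _ Ag1 Ag2) Axy).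
rewrite mD; apply: IJ.
  apply: (ID _ _ I1); apply: le_mm; [exact: leml| exact: le_refl].
apply: (ID _ _ I2); apply: le_mm; [exact: lemr| exact: le_refl].
Qed.


Definition mk (p q : bool) : m1 :=
  if p then (if q then m1_a else m1_1) else (if q then m1_0 else m1_b).
Lemma mk_meet p1 q1 p2 q2 : m1_meet (mk p1 q1) (mk p2 q2) = mk (p1 && p2) (q1 || q2).
Proof. by case: p1; case: q1; case: p2; case: q2. Qed.
Lemma mk_join p1 q1 p2 q2 : m1_join (mk p1 q1) (mk p2 q2) = mk (p1 || p2) (q1 && q2).
Proof. by case: p1; case: q1; case: p2; case: q2. Qed.
Lemma mk_neg p q : m1_neg (mk p q) = mk q p.
Proof. by case: p; case: q. Qed.

Definition hP (P : T -> Prop) (x : T) : m1 := mk `[< P x >] `[< P (N x) >].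

Lemma prime_meet P x y : is_prime P -> P (Mt x y) <-> P x /\ P y.
Proof.
move=> [[_ [PM PU]] _]; split; last by case; exact: PM.
move=> H; split; [apply: PU H _; exact: leml|apply: PU H _; exact: lemr].
Qed.
Lemma prime_join P x y : is_prime P -> P (J x y) <-> P x \/ P y.
Proof.
move=> [[_ [_ PU]] [_ PJ]]; split; first exact: PJ.
case=> H; [apply: PU H _; exact: lejl|apply: PU H _; exact: lejr].
Qed.

Lemma hP_hom P : is_prime P -> is_hom_to_M1 M (hP P).
Proof.
move=> Pp.
have bM x y : `[< P (Mt x y) >] = `[< P x >] && `[< P y >].
  apply: asbool_equiv_eqP (andPP (asboolP _) (asboolP _)) _; exact: prime_meet.
have bJ x y : `[< P (J x y) >] = `[< P x >] || `[< P y >].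
  apply: asbool_equiv_eqP (orPP (asboolP _) (asboolP _)) _; exact: prime_join.
have [[P1 _] [P0 _]] := Pp.
rewrite /hP; split; [|split; [|split; [|split]]].
- by move=> p q; rewrite mk_join nJ bJ bM.
- by move=> p q; rewrite mk_meet nM bJ bM.
- by move=> p; rewrite mk_neg nn.
- by rewrite n0 (asboolT P1) (asboolF P0).
- by rewrite n1 (asboolT P1) (asboolF P0).
Qed.

Lemma hP_le (P Q : T -> Prop) : (forall x, P x -> Q x) -> dual_le (hP P) (hP Q).
Proof.
move=> PQ p; rewrite /hP /m1_dle.
have [H1|H1] := pselect (P p); have [H2|H2] := pselect (P (N p));
  have [H3|H3] := pselect (Q p); have [H4|H4] := pselect (Q (N p));
  rewrite ?(asboolT H1) ?(asboolF H1) ?(asboolT H2) ?(asboolF H2)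
    ?(asboolT H3) ?(asboolF H3) ?(asboolT H4) ?(asboolF H4) /=;
  try solve [left; reflexivity|right; left; reflexivity|right; right; reflexivity].
all: exfalso; by [apply: H3; apply: PQ|apply: H4; apply: PQ].
Qed.

Lemma hP_in P x : P x -> is_prime P -> hP P x = m1_a \/ hP P x = m1_1.
Proof. move=> Px _; rewrite /hP (asboolT Px); by case: `[< _ >]; [left|right]. Qed.
Lemma hP_out P x : ~ P x -> hP P x = m1_0 \/ hP P x = m1_b.
Proof. move=> Px; rewrite /hP (asboolF Px); by case: `[< _ >]; [left|right]. Qed.

Lemma up_filter x : is_filter (fun z => le x z).
Proof.
split; [exact: le1|split]; first by move=> a b H1 H2; exact: le_m.
by move=> a b H1 H2; exact: le_trans H2.
Qed.
Lemma down_ideal y : is_ideal (fun z => le z y).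
Proof.
split; [exact: le0|split]; first by move=> a b H1 H2; exact: le_j.
by move=> a b H1 H2; exact: le_trans H2 H1.
Qed.

Lemma sep_le x y : ~ le x y -> exists P, is_prime P /\ P x /\ ~ P y.
Proof.
move=> nl.
have [|P [Pp [FP PI]]] := PFT (up_filter x) (down_ideal y).
  move=> z H1 H2; apply: nl; exact: le_trans H2.
exists P; split=> //; split; first by apply: FP; exact: le_refl.
move=> Py; apply: (PI y) => //; exact: le_refl.
Qed.

Lemma Sep x y : x <> y -> exists h, is_hom_to_M1 M h /\ h x <> h y.
Proof.
move=> nxy.
have [nl|nl] : ~ le x y \/ ~ le y x.
  apply: contrapT => /not_orP [/contrapT H1 /contrapT H2]; apply: nxy; exact: le_anti.
- have [P [Pp [Px nPy]]] := sep_le nl.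
  exists (hP P); split; first exact: hP_hom.
  by case: (hP_in Px Pp) => ->; case: (hP_out nPy) => ->.
- have [P [Pp [Py nPx]]] := sep_le nl.
  exists (hP P); split; first exact: hP_hom.
  by case: (hP_in Py Pp) => ->; case: (hP_out nPx) => ->.
Qed.

Lemma eq_hom x y : (forall h, is_hom_to_M1 M h -> h x = h y) -> x = y.
Proof.
move=> H; apply: contrapT => /Sep [h [hh nh]]; apply: nh; exact: H.
Qed.


Section HomFacts.
Variable g : T -> m1.
Hypothesis Hg : is_hom_to_M1 M g.
Lemma hJ p q : g (J p q) = m1_join (g p) (g q). Proof. by case: Hg. Qed.
Lemma hM p q : g (Mt p q) = m1_meet (g p) (g q). Proof. by case: Hg => _ []. Qed.
Lemma hN p : g (N p) = m1_neg (g p). Proof. by case: Hg => _ [_ []]. Qed.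
Lemma h0 : g Z = m1_0. Proof. by case: Hg => _ [_ [_ []]]. Qed.
Lemma h1 : g O = m1_1. Proof. by case: Hg => _ [_ [_ []]]. Qed.
End HomFacts.

Ltac fin := intros; unfold m1_dle in *; simpl in *;
  intuition (try discriminate; try congruence).

Definition isB p := J p (N p) = O.

Lemma boolv g p : is_hom_to_M1 M g -> isB p -> g p = m1_0 \/ g p = m1_1.
Proof.
move=> Hg Bp; have := f_equal g Bp; rewrite (hJ Hg) (hN Hg) (h1 Hg).
case: (g p) => /=; fin.
Qed.

Lemma isB_hom p : (forall g, is_hom_to_M1 M g -> g p = m1_0 \/ g p = m1_1) -> isB p.
Proof.
move=> H; apply: eq_hom => g Hg; rewrite (hJ Hg) (hN Hg) (h1 Hg).
by case: (H g Hg) => ->.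
Qed.

Lemma isBJ p q : isB p -> isB q -> isB (J p q).
Proof.
move=> Bp Bq; apply: isB_hom => g Hg; rewrite (hJ Hg).
by case: (boolv Hg Bp) => ->; case: (boolv Hg Bq) => ->; [left|right|right|right].
Qed.
Lemma isBM p q : isB p -> isB q -> isB (Mt p q).
Proof.
move=> Bp Bq; apply: isB_hom => g Hg; rewrite (hM Hg).
by case: (boolv Hg Bp) => ->; case: (boolv Hg Bq) => ->; [left|left|left|right].
Qed.
Lemma isBN p : isB p -> isB (N p).
Proof.
move=> Bp; apply: isB_hom => g Hg; rewrite (hN Hg).
by case: (boolv Hg Bp) => ->; [right|left].
Qed.
Lemma isB0 : isB Z. Proof. by rewrite /isB n0 j0l. Qed.
Lemma isB1 : isB O. Proof. by rewrite /isB j1l. Qed.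

Definition cond3 := forall x y : T -> m1, is_hom_to_M1 M x -> is_hom_to_M1 M y ->
  dual_le x y -> x = y \/ x = (fun p => m1_f (y p)).
Definition condS := forall x, exists t,
  Mt t (Mt x (N x)) = Z /\ J t (Mt x (N x)) = J x (N x).

Definition tv (c : m1) := match c with m1_0 | m1_1 => m1_1 | _ => m1_0 end.

Lemma tval g x t : is_hom_to_M1 M g ->
  Mt t (Mt x (N x)) = Z -> J t (Mt x (N x)) = J x (N x) -> g t = tv (g x).
Proof.
move=> Hg e1 e2; have := f_equal g e1; have := f_equal g e2.
rewrite !(hJ Hg) !(hM Hg) !(hN Hg) (h0 Hg).
case: (g t); case: (g x); fin.
Qed.

Lemma two_diff (h k : T -> m1) :
  ~ (h = k \/ h = (fun p => m1_f (k p))) ->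
  exists p q, h p <> k p /\ h q <> m1_f (k q).
Proof.
move=> /not_orP [n1 n2].
have [p hp] : exists p, h p <> k p.
  apply: contrapT => H; apply: n1; apply: funext => p.
  by apply: contrapT => H'; apply: H; exists p.
have [q hq] : exists q, h q <> m1_f (k q).
  apply: contrapT => H; apply: n2; apply: funext => q.
  by apply: contrapT => H'; apply: H; exists q.
by exists p, q.
Qed.

Lemma S_to_3 : condS -> cond3.
Proof.
move=> HS h k Hh Hk hk.
have KP z : tv (h z) = tv (k z).
  have [t [e1 e2]] := HS z.
  rewrite -(tval Hh e1 e2) -(tval Hk e1 e2); have := hk t.
  rewrite (tval Hh e1 e2) (tval Hk e1 e2).
  case: (h z); case: (k z); fin.
apply: contrapT => /two_diff [p [q [hp hq]]].
have := KP p; have := KP q; have := KP (J p q); have := KP (Mt p q);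
have := dlebP (hk p); have := dlebP (hk q).
rewrite !(hJ Hh) !(hJ Hk) !(hM Hh) !(hM Hk).
move: (neqb hp) (neqb hq); case: (h p); case: (k p); case: (h q); case: (k q) => //.
Qed.


Lemma ker_cong g : is_hom_to_M1 M g -> is_congruence M (fun p q => g p = g q).
Proof.
move=> Hg; split; first by [].
split; first by [].
split; first by [].
split; first by move=> x y w -> ->.
split; first by move=> x x' y y' e1 e2; rewrite !(hJ Hg) e1 e2.
split; first by move=> x x' y y' e1 e2; rewrite !(hM Hg) e1 e2.
by move=> x x' e; rewrite !(hN Hg) e.
Qed.

Lemma perf_to_3 : perfect_extension M (boolean_skeleton M) -> cond3.
Proof.
move=> Hp h k Hh Hk hk.
pose phi p q := isB p /\ isB q /\ h p = h q.
have Bhk p : isB p -> h p = k p.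
  move=> Bp; have := hk p; case: (boolv Hh Bp) => ->; case: (boolv Hk Bp) => ->; fin.
have cphi : is_congruence_on M (boolean_skeleton M) phi.
  split; first by move=> x y [? [? _]].
  split; first by move=> x Bx.
  split; first by move=> x y [? [? ?]].
  split; first by move=> x y w [? [? e1]] [? [? e2]]; split=> //; split=> //; rewrite e1.
  split; first by move=> x x' y y' [? [? e1]] [? [? e2]]; split; [|split];
    [exact: isBJ|exact: isBJ|rewrite !(hJ Hh) e1 e2].
  split; first by move=> x x' y y' [? [? e1]] [? [? e2]]; split; [|split];
    [exact: isBM|exact: isBM|rewrite !(hM Hh) e1 e2].
  by move=> x x' [? [? e1]]; split; [|split]; [exact: isBN|exact: isBN|rewrite !(hN Hh) e1].
have [_ uniq] := Hp phi cphi.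
have K := uniq _ _ (ker_cong Hh) _ (ker_cong Hk).
have {K} K : forall p q, h p = h q <-> k p = k q.
  apply: K.
  - by move=> x y Bx By; split; [move=> e; split=> //|case=> _ []].
  - move=> x y Bx By; rewrite -(Bhk _ Bx) -(Bhk _ By).
    by split; [move=> e; split=> //|case=> _ []].
apply: contrapT => /two_diff [p [q [hp hq]]].
have := iffb (K p Z); have := iffb (K p O); have := iffb (K p (N p));
have := iffb (K q Z); have := iffb (K q O); have := iffb (K q (N q));
have := iffb (K (J p q) O); have := iffb (K (Mt p q) Z);
have := dlebP (hk p); have := dlebP (hk q).
rewrite !(hJ Hh) !(hJ Hk) !(hM Hh) !(hM Hk) !(hN Hh) !(hN Hk)
  (h0 Hh) (h0 Hk) (h1 Hh) (h1 Hk).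
move: (neqb hp) (neqb hq); case: (h p); case: (k p); case: (h q); case: (k q) => //.
Qed.


Lemma filter_le (P : T -> Prop) x y : is_filter P -> P x -> le x y -> P y.
Proof. by case=> _ [_ H]; apply: H. Qed.

Lemma three_to_S : cond3 -> condS.
Proof.
move=> H3 x.
set s := J x (N x); set s' := Mt x (N x).
have Ns : N s = s' by rewrite /s nJ nn mC.
have ss' : le s' s by apply: (le_trans (leml _ _)); exact: lejl.
apply: contrapT => nex.
pose F' t := le s (J t s').
have F'f : is_filter F'.
  split; first by rewrite /F' j1l; exact: le1.
  split; last by move=> a b Ha lab; apply: le_trans Ha _; exact: le_jj (le_refl _).
  move=> a b Ha Hb; rewrite /F' jC jD jC (jC s'); exact: le_m.
have C1 t : F' t -> Mt t s' <> Z.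
  move=> Ft e; apply: nex; exists (Mt t s); split.
    by rewrite -mA (mC s) ss' e.
  rewrite jC jD (jC s' t) ((leJ s' s).1 ss') mC; exact: Ft.
pose G z := exists2 t, F' t & le (Mt t s') z.
have Gf : is_filter G.
  split; first by exists O; [rewrite /F' j1l; exact: le1|exact: le1].
  split; last by move=> a b [t Ft l] lab; exists t => //; exact: le_trans lab.
  move=> a b [t1 F1 l1] [t2 F2 l2]; exists (Mt t1 t2).
    by case: F'f => _ [H _]; exact: H.
  rewrite mMM.
  exact: le_mm.
have I0 : is_ideal (fun z => z = Z).
  split=> //; split; first by move=> a b -> ->; rewrite j0.
  by move=> a b -> l; move: l; rewrite /le m0.
have [|R [Rp [GR RI]]] := PFT Gf I0.
  move=> z [t Ft l] ez; rewrite ez in l; apply: (C1 t Ft); move: l; rewrite /le => <-.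
  by rewrite m0.
have Rs' : R s' by apply: GR; exists O; [rewrite /F' j1l; exact: le1|rewrite m1l; exact: le_refl].
have Rs : R s by apply: (filter_le (Rp.1) Rs').
have F'R t : F' t -> R t by move=> Ft; apply: GR; exists t => //; exact: leml.
pose Jd z := exists2 i, ~ R i & le z (J i s').
have Jdi : is_ideal Jd.
  split; first by exists Z; [by case: Rp => _ []|exact: le0].
  split; last by move=> a b [i ni l] lab; exists i => //; exact: le_trans l.
  move=> a b [i1 n1 l1] [i2 n2 l2]; exists (J i1 i2).
    by move=> /(prime_join _ _ Rp) [].
  rewrite jJJ.
  exact: le_jj.
have [|Q [Qp [sQ QJ]]] := PFT (up_filter s) Jdi.
  move=> z lz [i ni l]; apply: ni; apply: F'R; exact: le_trans l.
have Qs : Q s by apply: sQ; exact: le_refl.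
have nQs' : ~ Q s' by move=> Qs'; apply: (QJ s') => //; exists Z; [by case: Rp => _ []|rewrite j0l; exact: le_refl].
have QR z : Q z -> R z.
  move=> Qz; apply: contrapT => nRz; apply: (QJ z) => //; exists z => //; exact: lejl.
have hQs : hP Q s = m1_1 by rewrite /hP (asboolT Qs) Ns (asboolF nQs').
have hRs : hP R s = m1_a by rewrite /hP (asboolT Rs) Ns (asboolT Rs').
case: (H3 _ _ (hP_hom Qp) (hP_hom Rp) (hP_le QR)) => [/(congr1 (fun f => f s))|/(congr1 (fun f => f s))];
  by rewrite hQs hRs.
Qed.


Ltac homs Hg := do ![rewrite (hJ Hg)|rewrite (hM Hg)|rewrite (hN Hg)|rewrite (h0 Hg)|rewrite (h1 Hg)].

Definition thetaF (phi : T -> T -> Prop) (x y : T) :=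
  exists e, isB e /\ phi e O /\ Mt x e = Mt y e.

Definition bic a b := J (Mt a b) (Mt (N a) (N b)).

Lemma negB x e : isB e -> Mt (N x) e = Mt (N (Mt x e)) e.
Proof.
move=> Be; apply: eq_hom => g Hg; homs Hg.
by case: (boolv Hg Be) => ->; case: (g x).
Qed.

Lemma isB_bic a b : isB a -> isB b -> isB (bic a b).
Proof. move=> Ba Bb; rewrite /bic; apply: isBJ; apply: isBM => //; exact: isBN. Qed.

Lemma bic_self b : isB b -> bic b b = O.
Proof. by move=> Bb; rewrite /bic !mxx. Qed.

Lemma bic_meet a b : isB a -> isB b -> Mt a (bic a b) = Mt b (bic a b).
Proof.
move=> Ba Bb; apply: eq_hom => g Hg; rewrite /bic; homs Hg.
by case: (boolv Hg Ba) => ->; case: (boolv Hg Bb) => ->.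
Qed.

Section Cong.
Variable th : T -> T -> Prop.
Hypothesis Hth : is_congruence M th.
Lemma cg_refl x : th x x. Proof. by case: Hth => _ [H _]; exact: H. Qed.
Lemma cg_sym x y : th x y -> th y x. Proof. by case: Hth => _ [_ [H _]]; exact: H. Qed.
Lemma cg_trans x y w : th x y -> th y w -> th x w.
Proof. by case: Hth => _ [_ [_ [H _]]]; exact: H. Qed.
Lemma cgJ x x' y y' : th x x' -> th y y' -> th (J x y) (J x' y').
Proof. by case: Hth => _ [_ [_ [_ [H _]]]]; exact: H. Qed.
Lemma cgM x x' y y' : th x x' -> th y y' -> th (Mt x y) (Mt x' y').
Proof. by case: Hth => _ [_ [_ [_ [_ [H _]]]]]; exact: H. Qed.
Lemma cgN x x' : th x x' -> th (N x) (N x').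
Proof. by case: Hth => _ [_ [_ [_ [_ [_ H]]]]]; exact: H. Qed.
Lemma cg_bic a b : th a b -> isB b -> th (bic a b) O.
Proof.
move=> ab Bb; rewrite -(bic_self Bb); apply: cgJ; apply: cgM => //; try exact: cg_refl.
all: apply: cgN => //; exact: cg_refl.
Qed.
End Cong.

Section Phi.
Variable phi : T -> T -> Prop.
Hypothesis Hphi : is_congruence_on M (boolean_skeleton M) phi.
Lemma ph_B x y : phi x y -> isB x /\ isB y. Proof. by case: Hphi => H _; exact: H. Qed.
Lemma ph_refl x : isB x -> phi x x. Proof. by case: Hphi => _ [H _]; exact: H. Qed.
Lemma ph_sym x y : phi x y -> phi y x. Proof. by case: Hphi => _ [_ [H _]]; exact: H. Qed.
Lemma ph_trans x y w : phi x y -> phi y w -> phi x w.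
Proof. by case: Hphi => _ [_ [_ [H _]]]; exact: H. Qed.
Lemma phJ x x' y y' : phi x x' -> phi y y' -> phi (J x y) (J x' y').
Proof. by case: Hphi => _ [_ [_ [_ [H _]]]]; exact: H. Qed.
Lemma phM x x' y y' : phi x x' -> phi y y' -> phi (Mt x y) (Mt x' y').
Proof. by case: Hphi => _ [_ [_ [_ [_ [H _]]]]]; exact: H. Qed.
Lemma phN x x' : phi x x' -> phi (N x) (N x').
Proof. by case: Hphi => _ [_ [_ [_ [_ [_ H]]]]]; exact: H. Qed.

Lemma mc1 x x' e1 e2 : Mt x e1 = Mt x' e1 -> Mt x (Mt e1 e2) = Mt x' (Mt e1 e2).
Proof. by move=> q; rewrite !mA q. Qed.
Lemma mc2 x x' e1 e2 : Mt x e2 = Mt x' e2 -> Mt x (Mt e1 e2) = Mt x' (Mt e1 e2).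
Proof. by move=> q; rewrite (mC e1) !mA q. Qed.
Lemma mDr x y e : Mt (J x y) e = J (Mt x e) (Mt y e).
Proof. by rewrite mC mD !(mC e). Qed.

Lemma thetaF_cong : is_congruence M (thetaF phi).
Proof.
have mm e1 e2 : phi e1 O -> phi e2 O -> phi (Mt e1 e2) O.
  by move=> H1 H2; rewrite -(mxx O); exact: phM.
split; first by [].
split; first by move=> x _; exists O; split; [exact: isB1|split=> //; exact: ph_refl isB1].
split; first by move=> x y [e [Be [pe ee]]]; exists e.
split.
  move=> x y w [e1 [B1 [p1 q1]]] [e2 [B2 [p2 q2]]]; exists (Mt e1 e2).
  split; first exact: isBM.
  split; first exact: mm.
  by rewrite (mc1 _ q1) (mc2 _ q2).
split.
  move=> x x' y y' [e1 [B1 [p1 q1]]] [e2 [B2 [p2 q2]]]; exists (Mt e1 e2).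
  split; first exact: isBM. split; first exact: mm.
  by rewrite !mDr (mc1 _ q1) (mc2 _ q2).
split.
  move=> x x' y y' [e1 [B1 [p1 q1]]] [e2 [B2 [p2 q2]]]; exists (Mt e1 e2).
  split; first exact: isBM. split; first exact: mm.
  by rewrite [LHS]mMM [RHS]mMM (mc1 _ q1) (mc2 _ q2).
move=> x x' [e [Be [pe ee]]]; exists e; split=> //; split=> //.
by rewrite (negB x Be) (negB x' Be) ee.
Qed.

Lemma thetaF_restr : restricts_to (boolean_skeleton M) (thetaF phi) phi.
Proof.
move=> p q Bp Bq; split.
  move=> [e [Be [pe ee]]].
  have h1 : phi (Mt p e) p by rewrite -{2}(mO p); apply: phM => //; exact: ph_refl.
  have h2 : phi (Mt q e) q by rewrite -{2}(mO q); apply: phM => //; exact: ph_refl.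
  apply: ph_trans (ph_sym h1) _; rewrite ee; exact: h2.
move=> pq; exists (bic p q); split; first exact: isB_bic.
split; last exact: bic_meet.
rewrite -(bic_self Bq); apply: phJ; apply: phM => //; try exact: ph_refl.
all: apply: phN => //; exact: ph_refl.
Qed.

Lemma thetaF_below th : is_congruence M th -> restricts_to (boolean_skeleton M) th phi ->
  forall x y, thetaF phi x y -> th x y.
Proof.
move=> Hth R x y [e [Be [pe ee]]].
have te : th e O by apply/(R _ _ Be isB1).
have h1 : th (Mt x e) x by rewrite -{2}(mO x); apply: cgM => //; exact: cg_refl.
have h2 : th (Mt y e) y by rewrite -{2}(mO y); apply: cgM => //; exact: cg_refl.
apply: cg_trans (cg_sym Hth h1) _ => //; rewrite ee; exact: h2.
Qed.
End Phi.


Definition wA x y := J (Mt x y) (N (J x y)).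
Definition wB x y := J (J x y) (N (Mt x y)).

Lemma key th x y : condS -> is_congruence M th -> th x y ->
  exists e, isB e /\ th e O /\ Mt x e = Mt y e.
Proof.
move=> HS Hth txy.
have [t1 [T1a T1b]] := HS (wA x y).
have [t2 [T2a T2b]] := HS (wB x y).
have txm : th x (Mt x y) by rewrite -{1}(mxx x); apply: cgM => //; exact: cg_refl.
have txj : th x (J x y) by rewrite -{1}(jxx x); apply: cgJ => //; exact: cg_refl.
have tmj : th (Mt x y) (J x y) by apply: cg_trans (cg_sym Hth txm) txj.
have tw : th (wA x y) (wB x y).
  by apply: cgJ => //; apply: cgN => //; exact: cg_sym.
pose b1 := Mt (wA x y) t1; pose b2 := Mt (wB x y) t1.
pose r := Mt (N t1) t2.
pose c1 := Mt (Mt (wB x y) (N (wB x y))) r.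
pose c2 := Mt (J (wB x y) (N (wB x y))) r.
have tb : th b1 b2 by apply: cgM => //; exact: cg_refl.
have eqA : Mt (Mt (wA x y) (N (wA x y))) r = Mt (J (wA x y) (N (wA x y))) r.
  apply: eq_hom => g Hg; rewrite /r; homs Hg.
  rewrite (tval Hg T1a T1b) (tval Hg T2a T2b) /wA /wB; homs Hg.
  by case: (g x); case: (g y).
have t1' : th (Mt (Mt (wA x y) (N (wA x y))) r) c1.
  apply: cgM => //; last exact: cg_refl.
  by apply: cgM => //; apply: cgN.
have t2' : th (Mt (J (wA x y) (N (wA x y))) r) c2.
  apply: cgM => //; last exact: cg_refl.
  by apply: cgJ => //; apply: cgN.
have tc : th c1 c2.
  apply: cg_trans (cg_sym Hth t1') _ => //; by rewrite eqA.
have Bpw z : (forall g, is_hom_to_M1 M g -> g (J z (N z)) = m1_1) -> isB z.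
  by move=> H; apply: eq_hom => g Hg; rewrite (H g Hg) (h1 Hg).
have Bb1 : isB b1.
  apply: Bpw => g Hg; rewrite /b1; homs Hg.
  rewrite (tval Hg T1a T1b) /wA /wB; homs Hg.
  by case: (g x); case: (g y).
have Bb2 : isB b2.
  apply: Bpw => g Hg; rewrite /b2; homs Hg.
  rewrite (tval Hg T1a T1b) /wA /wB; homs Hg.
  by case: (g x); case: (g y).
have Bc1 : isB c1.
  apply: Bpw => g Hg; rewrite /c1 /r; homs Hg.
  rewrite (tval Hg T1a T1b) (tval Hg T2a T2b) /wA /wB; homs Hg.
  by case: (g x); case: (g y).
have Bc2 : isB c2.
  apply: Bpw => g Hg; rewrite /c2 /r; homs Hg.
  rewrite (tval Hg T1a T1b) (tval Hg T2a T2b) /wA /wB; homs Hg.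
  by case: (g x); case: (g y).
exists (Mt (bic b1 b2) (bic c1 c2)); split; first by apply: isBM; exact: isB_bic.
split.
  rewrite -(mxx O); apply: cgM => //; exact: cg_bic.
apply: eq_hom => g Hg; rewrite /bic /b1 /b2 /c1 /c2 /r; homs Hg.
rewrite (tval Hg T1a T1b) (tval Hg T2a T2b) /wA /wB; homs Hg.
by case: (g x); case: (g y).
Qed.

Lemma S_to_perf : condS -> perfect_extension M (boolean_skeleton M).
Proof.
move=> HS phi Hphi; split.
  exists (thetaF phi); split; [exact: thetaF_cong|exact: thetaF_restr].
move=> th1 th2 C1 R1 C2 R2.
have go th th' : is_congruence M th -> restricts_to (boolean_skeleton M) th phi ->
    is_congruence M th' -> restricts_to (boolean_skeleton M) th' phi ->
    forall x y, th x y -> th' x y.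
  move=> Ct Rt Ct' Rt' x y txy; apply: (thetaF_below Ct' Rt').
  have [e [Be [te ee]]] := key HS Ct txy.
  exists e; split=> //; split=> //; exact/(Rt _ _ Be isB1).
by move=> x y; split; apply: go.
Qed.


Lemma two_to_S : iso_boolean_product_M1 M -> condS.
Proof.
move=> [Y [kind [H [Hinj [HJ [HMt [HN [H0 [H1 bp]]]]]]]]].
have [_ [_ [P0 [P1 [_ [_ [PN [_ [_ [eqcl patch]]]]]]]]]] := bp.
move=> x.
pose u := H x.
have Pu : exists x', H x' = u by exists x.
have Pnu : exists x', H x' = (fun y => m1_neg (u y)) by exists (N x); rewrite HN.
have cK := eqcl _ _ Pu Pnu.
have [t Ht] : exists t, H t = (fun y => tv (u y)).
  apply: (patch (fun _ => m1_0) (fun _ => m1_1) _ P0 P1 cK).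
  - move=> y Ky; move: Ky; rewrite /=; case: (u y) => //= e; discriminate.
  - move=> y nK; move: nK; rewrite /=; case: (u y) => //= nK; exfalso; exact: nK.
exists t; split; apply: Hinj.
  rewrite HMt HMt HN H0 Ht; apply: funext => y /=; rewrite /u; by case: (H x y).
rewrite HJ HJ HMt HN Ht; apply: funext => y /=; rewrite /u; by case: (H x y).
Qed.

Section Rep.
Hypothesis HS : condS.

Lemma BmN e : isB e -> Mt e (N e) = Z.
Proof. move=> Be; apply: eq_hom => g Hg; homs Hg; by case: (boolv Hg Be) => ->. Qed.

Section UFfacts.
Variable V : Pts M.
Local Notation v := (sval V).
Lemma vB e : v e -> isB e. Proof. by case: (svalP V) => H _; exact: H. Qed.
Lemma vO : v O. Proof. by case: (svalP V) => _ []. Qed.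
Lemma vnZ : ~ v Z. Proof. by case: (svalP V) => _ [_ []]. Qed.
Lemma vM e1 e2 : v e1 -> v e2 -> v (Mt e1 e2).
Proof. by case: (svalP V) => _ [_ [_ [H _]]]; exact: H. Qed.
Lemma vD e : isB e -> v e \/ v (N e).
Proof. by case: (svalP V) => _ [_ [_ [_ [H _]]]]; exact: H. Qed.
Lemma vS e1 e2 : isB e1 -> isB e2 -> v (Mt e1 e2) -> v e1 /\ v e2.
Proof. by case: (svalP V) => _ [_ [_ [_ [_ H]]]]; exact: H. Qed.
Lemma vNB e : isB e -> v (N e) <-> ~ v e.
Proof.
move=> Be; split.
  by move=> vn ve; apply: vnZ; rewrite -(BmN Be); exact: vM.
by move=> nv; case: (vD Be).
Qed.
End UFfacts.

Lemma prime_pt P : is_prime P -> isUF M (fun e => isB e /\ P e).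
Proof.
move=> Pp; have [[P1 [PM PU]] [P0 PJ]] := Pp.
split; first by move=> e [].
split; first by split; [exact: isB1|].
split; first by case.
split; first by move=> e1 e2 [B1 p1] [B2 p2]; split; [exact: isBM|exact: PM].
split.
  move=> e Be; have : P (J e (N e)) by rewrite Be.
  by case/PJ => H; [left|right; split=> //; exact: isBN].
move=> e1 e2 B1 B2 [_ /(prime_meet _ _ Pp) [p1 p2]]; by split.
Qed.

Definition mkPt P (Pp : is_prime P) : Pts M := exist _ _ (prime_pt Pp).

Lemma pt_prime (V : Pts M) : exists P, is_prime P /\ (forall e, sval V e -> P e).
Proof.
have Ff : is_filter (fun z => exists2 e, sval V e & le e z).
  split; first by exists O; [exact: vO|exact: le_refl].
  split; first by move=> a b [e1 v1 l1] [e2 v2 l2]; exists (Mt e1 e2); [exact: vM|exact: le_mm].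
  by move=> a b [e v l] lab; exists e => //; exact: le_trans lab.
have Ii : is_ideal (fun z => z = Z).
  split=> //; split; first by move=> a b -> ->; rewrite j0.
  by move=> a b -> l; move: l; rewrite /le m0.
have [|P [Pp [FP PI]]] := PFT Ff Ii.
  move=> z [e ve l] ez; rewrite ez in l; apply: (vnZ (V:=V)).
  have -> : Z = e by apply: le_anti => //; exact: le0.
  exact: ve.
exists P; split=> // e ve; apply: FP; exists e => //; exact: le_refl.
Qed.

Definition PV (V : Pts M) := proj1_sig (cid (pt_prime V)).
Lemma PV_prime V : is_prime (PV V). Proof. by case: (proj2_sig (cid (pt_prime V))). Qed.
Lemma PV_sup V e : sval V e -> PV V e. Proof. by case: (proj2_sig (cid (pt_prime V))) => _; apply. Qed.
Lemma PV_B V e : isB e -> PV V e <-> sval V e.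
Proof.
move=> Be; split; last exact: PV_sup.
move=> pe; apply: contrapT => nv; have /(PV_sup) pn := (proj2 (vNB V Be) nv).
have [_ [P0 _]] := PV_prime V; apply: P0; rewrite -(BmN Be).
by case: (PV_prime V) => [[_ [PM _]] _]; exact: PM.
Qed.

Definition fl (h : T -> m1) := fun x => m1_f (h x).
Lemma fl_hom h : is_hom_to_M1 M h -> is_hom_to_M1 M (fl h).
Proof.
move=> Hh; rewrite /fl; split; [|split; [|split; [|split]]].
- by move=> p q; rewrite (hJ Hh); case: (h p); case: (h q).
- by move=> p q; rewrite (hM Hh); case: (h p); case: (h q).
- by move=> p; rewrite (hN Hh); case: (h p).
- by rewrite (h0 Hh).
- by rewrite (h1 Hh).
Qed.

Definition h0V V := hP (PV V).
Definition hV V := if `[< (exists x, h0V V x = m1_b) /\ ~ (exists x, h0V V x = m1_a) >]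
  then fl (h0V V) else h0V V.

Lemma hV_hom V : is_hom_to_M1 M (hV V).
Proof.
rewrite /hV; case: `[< _ >]; last exact: hP_hom (PV_prime V).
exact: fl_hom (hP_hom (PV_prime V)).
Qed.

Lemma hV_norm V : (exists x, hV V x = m1_b) -> exists x, hV V x = m1_a.
Proof.
rewrite /hV; case: (pselect ((exists x, h0V V x = m1_b) /\ ~ (exists x, h0V V x = m1_a))) => c.
  rewrite (asboolT c) /fl => _; case: c => [[x hx] _]; exists x; by rewrite hx.
rewrite (asboolF c) => hb; apply: contrapT => na; apply: c; split=> //.
Qed.

Lemma hV_B V e : isB e -> hV V e = if `[< sval V e >] then m1_1 else m1_0.
Proof.
move=> Be.
have E : h0V V e = if `[< sval V e >] then m1_1 else m1_0.
  rewrite /h0V /hP; have [ve|nve] := pselect (sval V e).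
    rewrite (asboolT ve) (asboolT (PV_sup ve)) asboolF //.
    move=> /(PV_B _ (isBN Be)) /(vNB V Be); exact.
  rewrite (asboolF nve) asboolF; last by move=> /(PV_B _ Be).
  by rewrite asboolT //; apply/(PV_B _ (isBN Be)); apply/(vNB V Be).
rewrite /hV; case: ifP => _; rewrite /fl E //.
by case: `[< sval V e >].
Qed.

Lemma hV_in V e : sval V e -> hV V e = m1_1.
Proof. by move=> ve; rewrite (hV_B _ (vB ve)) asboolT. Qed.
Lemma hV_out V e : isB e -> ~ sval V e -> hV V e = m1_0.
Proof. by move=> Be ve; rewrite (hV_B _ Be) asboolF. Qed.

Definition t_of z := proj1_sig (cid (HS z)).
Lemma t_spec z : Mt (t_of z) (Mt z (N z)) = Z /\ J (t_of z) (Mt z (N z)) = J z (N z).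
Proof. exact: proj2_sig (cid (HS z)). Qed.

Definition epsv x y :=
  Mt (bic (Mt (wA x y) (t_of (wA x y))) (Mt (wB x y) (t_of (wA x y))))
     (bic (Mt (Mt (wB x y) (N (wB x y))) (Mt (N (t_of (wA x y))) (t_of (wB x y))))
          (Mt (J (wB x y) (N (wB x y))) (Mt (N (t_of (wA x y))) (t_of (wB x y))))).

Lemma eps_spec g x y : is_hom_to_M1 M g ->
  g (epsv x y) = if g x == g y then m1_1 else m1_0.
Proof.
move=> Hg; have [T1a T1b] := t_spec (wA x y); have [T2a T2b] := t_spec (wB x y).
rewrite /epsv /bic; homs Hg.
rewrite (tval Hg T1a T1b) (tval Hg T2a T2b) /wA /wB; homs Hg.
by case: (g x); case: (g y).
Qed.

Lemma eps_B x y : isB (epsv x y).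
Proof.
apply: isB_hom => g Hg; rewrite (eps_spec _ _ Hg); by case: (g x == g y); [right|left].
Qed.

Lemma eps_meet x y : Mt x (epsv x y) = Mt y (epsv x y).
Proof.
apply: eq_hom => g Hg; rewrite (hM Hg x) (hM Hg y) (eps_spec _ _ Hg).
by case: (g x); case: (g y).
Qed.

Lemma hV_ker V x y : hV V x = hV V y <-> sval V (epsv x y).
Proof.
split=> [e|ve].
  apply: contrapT => nv; have := hV_out (eps_B x y) nv.
  by rewrite (eps_spec _ _ (hV_hom V)) e eqxx.
have := hV_in ve; rewrite (eps_spec _ _ (hV_hom V)); by case: eqP.
Qed.

Definition Hrep x : Pts M -> m1 := fun V => hV V x.
Definition kindf (V : Pts M) : Defs.factor :=
  if `[< exists x, hV V x = m1_a >] then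
    (if `[< exists x, hV V x = m1_b >] then F_M1 else F_0a1) else F_01.

Lemma vJ (W : Pts M) e1 e2 : isB e1 -> isB e2 -> sval W (J e1 e2) -> sval W e1 \/ sval W e2.
Proof.
move=> B1 B2 wj; apply: contrapT => /not_orP [n1 n2].
have := vM (proj2 (vNB W B1) n1) (proj2 (vNB W B2) n2).
rewrite -nJ; move/(vNB W (isBJ B1 B2)); exact.
Qed.

Lemma bas_open e : open (bas M e).
Proof. by move=> V ve; exists e; split. Qed.

Lemma bas_compl e : isB e -> ~` bas M (N e) = bas M e.
Proof.
move=> Be; apply/seteqP; split=> V /=; rewrite /bas.
  by move=> H; apply: contrapT => nv; apply: H; apply/(vNB V Be).
by move=> ve /(vNB V Be).
Qed.

Lemma bas_clopen e : isB e -> clopen (bas M e).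
Proof.
move=> Be; split; first exact: bas_open.
rewrite -(bas_compl Be); apply: open_closedC; exact: bas_open.
Qed.

Lemma bas0 W : ~ bas M Z W. Proof. exact: vnZ. Qed.

Lemma clopen_bas (K : set (Pts M)) : clopen K -> exists e, isB e /\ K = bas M e.
Proof.
move=> [oK cK].
pose Id z := exists e1 e2, [/\ isB e1, isB e2, bas M e1 `<=` K, bas M e2 `<=` ~` K & le z (J e1 e2)].
have Idi : is_ideal Id.
  split; first by exists Z, Z; split; [exact: isB0|exact: isB0|move=> W /bas0|move=> W /bas0|exact: le0].
  split; last by move=> a b [e1 [e2 [B1 B2 s1 s2 l]]] lab; exists e1, e2; split=> //; exact: le_trans l.
  move=> a b [e1 [e2 [B1 B2 s1 s2 l]]] [e1' [e2' [B1' B2' s1' s2' l']]].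
  exists (J e1 e1'), (J e2 e2'); split; [exact: isBJ|exact: isBJ| | |].
  - by move=> W /(vJ B1 B1') [/s1|/s1'].
  - by move=> W /(vJ B2 B2') [/s2|/s2'].
  - apply: le_j.
      apply: le_trans l _; apply: le_jj; exact: lejl.
    apply: le_trans l' _; apply: le_jj; exact: lejr.
have IdO : Id O.
  apply: contrapT => nI.
  have [|P [Pp [FP PI]]] := PFT (up_filter O) Idi.
    move=> z lz Iz; apply: nI; have -> : O = z by apply: le_anti => //; exact: le1.
    exact: Iz.
  pose V := mkPt Pp.
  have [KV|nKV] := pselect (K V).
    have [e [[Be Pe] se]] := oK V KV.
    apply: (PI e Pe); exists e, Z; split=> //; [exact: isB0|by move=> W /bas0|].
    by rewrite j0; exact: le_refl.
  have [e [[Be Pe] se]] := closed_openC cK V nKV.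
  apply: (PI e Pe); exists Z, e; split=> //; [exact: isB0|by move=> W /bas0|].
  by rewrite j0l; exact: le_refl.
have [e1 [e2 [B1 B2 s1 s2 l]]] := IdO.
exists e1; split=> //; apply/seteqP; split=> W; last exact: s1.
move=> KW; have : sval W (J e1 e2).
  have -> : J e1 e2 = O by apply: le_anti => //; exact: le1.
  exact: vO.
by move/(vJ B1 B2) => [//|/s2].
Qed.

Lemma Pts_compact : compact [set: Pts M].
Proof.
move=> F PF FT.
pose U0 e := isB e /\ F (bas M e).
have basM e1 e2 : isB e1 -> isB e2 -> bas M (Mt e1 e2) = bas M e1 `&` bas M e2.
  move=> B1 B2; apply/seteqP; split=> W; first by move/(vS B1 B2).
  by move=> [w1 w2]; exact: vM.
have basO : bas M O = setT by apply/seteqP; split=> // W _; exact: vO.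
pose Ff z := exists2 e, U0 e & le e z.
have Fff : is_filter Ff.
  split; first by exists O; [split; [exact: isB1|rewrite basO; exact: filterT]|exact: le_refl].
  split; last by move=> a b [e ue l] lab; exists e => //; exact: le_trans lab.
  move=> a b [e1 [B1 u1] l1] [e2 [B2 u2] l2]; exists (Mt e1 e2); last exact: le_mm.
  split; first exact: isBM.
  rewrite basM //; exact: filterI.
have Ii : is_ideal (fun z => z = Z).
  split=> //; split; first by move=> a b -> ->; rewrite j0.
  by move=> a b -> l; move: l; rewrite /le m0.
have [|P [Pp [FP PI]]] := PFT Fff Ii.
  move=> z [e [Be Fe] l] ez; rewrite ez in l.
  have eZ : e = Z by apply: le_anti => //; exact: le0.
  rewrite eZ in Fe; apply: (filter_not_empty F).
  by apply: filterS Fe => W /bas0.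
exists (mkPt Pp); split=> //.
move=> A B FA [B0 [oB0 B0V sB]].
have [e [[Be Pe] se]] := oB0 _ B0V.
apply: contrapT => nAB.
have sub : A `<=` bas M (N e).
  move=> W AW; apply/(vNB W Be) => We; apply: nAB; exists W; split=> //.
  by apply: sB; apply: se.
have U0N : U0 (N e) by split; [exact: isBN|exact: filterS sub FA].
have PN : P (N e) by apply: FP; exists (N e) => //; exact: le_refl.
have [_ [P0 _]] := Pp; apply: P0; rewrite -(BmN Be).
by have [[_ [PM _]] _] := Pp; exact: PM.
Qed.

Lemma Pts_hausdorff : hausdorff_space (Pts M).
Proof.
move=> p q cl; apply: contrapT => npq.
have [e ne] : exists e, ~ (sval p e <-> sval q e).
  apply: contrapT => nx; apply: npq; case: p q nx {cl} => [p Hp] [q Hq] /= nx.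
  apply: eq_exist; apply: funext => e; apply: propext.
  by apply: contrapT => H; apply: nx; exists e.
have sep (a b : Pts M) : sval a e -> ~ sval b e -> cluster (nbhs a) b -> False.
  move=> ae nbe cab.
  have Be := vB ae.
  have [W [W1 W2]] := cab (bas M e) (bas M (N e))
    (ex_intro _ (bas M e) (And3 (@bas_open e) ae (@subset_refl _ _)))
    (ex_intro _ (bas M (N e)) (And3 (@bas_open (N e)) (proj2 (vNB b Be) nbe) (@subset_refl _ _))).
  by move: W2; rewrite /bas; move/(vNB W Be).
have [pe|npe] := pselect (sval p e).
  apply: (sep p q pe) => // qe; apply: ne; by split.
have qe : sval q e by apply: contrapT => nqe; apply: ne; split.
apply: (sep q p qe npe).
move=> A B nA nB; have [x [Bx Ax]] := cl B A nB nA; by exists x.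
Qed.

Lemma S_to_2 : Z <> O -> iso_boolean_product_M1 M.
Proof.
move=> H01.
exists (Pts M), kindf, Hrep.
split.
  move=> x x' E; apply: contrapT => nxx.
  have nO : ~ le O (epsv x x').
    move=> l; apply: nxx.
    have eO : epsv x x' = O by move: l; rewrite /le m1l.
    by rewrite -(mO x) -(mO x') -eO eps_meet.
  have [P [Pp [PO nPe]]] := sep_le nO.
  have := f_equal (fun u => u (mkPt Pp)) E; rewrite /Hrep => /hV_ker [_]; exact.
split; first by move=> x x'; apply: funext => V; rewrite /Hrep (hJ (hV_hom V)).
split; first by move=> x x'; apply: funext => V; rewrite /Hrep (hM (hV_hom V)).
split; first by move=> x; apply: funext => V; rewrite /Hrep (hN (hV_hom V)).
split; first by apply: funext => V; rewrite /Hrep (h0 (hV_hom V)).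
split; first by apply: funext => V; rewrite /Hrep (h1 (hV_hom V)).
split.
  have nl : ~ le O Z by move=> l; apply: H01; move: l; rewrite /le m1l.
  have [P [Pp _]] := sep_le nl; by exists (mkPt Pp).
split.
  move=> u [x <-] V; rewrite /Hrep /kindf.
  have [ea|na] := pselect (exists x, hV V x = m1_a);
  have [eb|nb] := pselect (exists x, hV V x = m1_b);
    rewrite ?(asboolT ea) ?(asboolF na) ?(asboolT eb) ?(asboolF nb) //=.
  - by case E: (hV V x); [left|right;left|exfalso; apply: nb; exists x|right;right].
  - by exfalso; apply: na; exact: hV_norm.
  - by case E: (hV V x); [left|exfalso; apply: na; exists x|exfalso; apply: nb; exists x|right].
split; first by exists Z; apply: funext => V; rewrite /Hrep (h0 (hV_hom V)).
split; first by exists O; apply: funext => V; rewrite /Hrep (h1 (hV_hom V)).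
split; first by move=> u v [x <-] [y <-]; exists (J x y); apply: funext => V; rewrite /Hrep (hJ (hV_hom V)).
split; first by move=> u v [x <-] [y <-]; exists (Mt x y); apply: funext => V; rewrite /Hrep (hM (hV_hom V)).
split; first by move=> u [x <-]; exists (N x); apply: funext => V; rewrite /Hrep (hN (hV_hom V)).
split.
  move=> V c; rewrite /kindf.
  have [ea|na] := pselect (exists x, hV V x = m1_a);
  have [eb|nb] := pselect (exists x, hV V x = m1_b);
    rewrite ?(asboolT ea) ?(asboolF na) ?(asboolT eb) ?(asboolF nb) //=.
  - case: c => _.
    + by exists (Hrep Z); split; [exists Z|rewrite /Hrep (h0 (hV_hom V))].
    + by case: ea => x ex; exists (Hrep x); split; [exists x|].
    + by case: eb => x ex; exists (Hrep x); split; [exists x|].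
    + by exists (Hrep O); split; [exists O|rewrite /Hrep (h1 (hV_hom V))].
  - case: c => //; try by case=> [|[]].
    + by exists (Hrep Z); split; [exists Z|rewrite /Hrep (h0 (hV_hom V))].
    + by case: ea => x ex; exists (Hrep x); split; [exists x|].
    + by exists (Hrep O); split; [exists O|rewrite /Hrep (h1 (hV_hom V))].
  - by exfalso; apply: na; exact: hV_norm.
  - case: c => //; try by case.
    + by exists (Hrep Z); split; [exists Z|rewrite /Hrep (h0 (hV_hom V))].
    + by exists (Hrep O); split; [exists O|rewrite /Hrep (h1 (hV_hom V))].
split.
  split; first exact: Pts_compact.
  split; first exact: Pts_hausdorff.
  move=> U oU y Uy; have [e [ye se]] := oU y Uy.
  exists (bas M e); split=> //; exact: bas_clopen (vB ye).
split.
  move=> u v [x <-] [y <-].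
  have -> : [set V | Hrep x V = Hrep y V] = bas M (epsv x y).
    by apply/seteqP; split=> V /hV_ker.
  exact: bas_clopen (eps_B x y).
move=> u v K [x <-] [y <-] cK w wK wnK.
have [e [Be Ke]] := clopen_bas cK.
exists (J (Mt x e) (Mt y (N e))); apply: funext => V.
rewrite /Hrep (hJ (hV_hom V)) !(hM (hV_hom V)).
have [ve|nve] := pselect (sval V e).
  rewrite (hV_in ve) (hV_out (isBN Be)); last by move/(vNB V Be).
  rewrite wK; last by rewrite Ke.
  by rewrite /Hrep; case: (hV V x); case: (hV V y).
rewrite (hV_out Be nve) (hV_in (proj2 (vNB V Be) nve)).
rewrite wnK; last by rewrite Ke.
by rewrite /Hrep; case: (hV V x); case: (hV V y).
Qed.

End Rep.
End DM.

Unset Implicit Arguments.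

Theorem mainTheorem2 (T : Type) (M : dm_ops T) :
  is_deMorgan M ->
  dm_zero M <> dm_one M ->
  [/\ (perfect_extension M (boolean_skeleton M) <-> iso_boolean_product_M1 M),
      (iso_boolean_product_M1 M <->
         (forall x y : T -> m1, is_hom_to_M1 M x -> is_hom_to_M1 M y ->
            dual_le x y -> x = y \/ x = (fun p => m1_f (y p))))
    & (perfect_extension M (boolean_skeleton M) <->
         (forall x y : T -> m1, is_hom_to_M1 M x -> is_hom_to_M1 M y ->
            dual_le x y -> x = y \/ x = (fun p => m1_f (y p))))].
Proof.
move=> HM H01.
have p3 : perfect_extension M (boolean_skeleton M) -> cond3 M by apply: perf_to_3.
have t3S : cond3 M -> condS M by apply: three_to_S.
have S3 : condS M -> cond3 M by apply: S_to_3.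
have Sp : condS M -> perfect_extension M (boolean_skeleton M) by apply: S_to_perf.
have tS : iso_boolean_product_M1 M -> condS M by apply: two_to_S.
have S2 : condS M -> iso_boolean_product_M1 M by move=> HS; apply: S_to_2.
split.
- by split=> h; [apply: S2; apply: t3S; exact: p3 h|apply: Sp; exact: tS h].
- by split=> h; [exact: S3 (tS h)|exact: S2 (t3S h)].
- by split=> h; [exact: p3 h|exact: Sp (t3S h)].
Qed.
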